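(* Let $\mathcal{C}\subseteq\mathcal{I}$ and let $f$ be a nonnegative real-valued function on partitions of $\mathcal{C}$ that is monotone and subadditive on the partition semilattice (with respect to refinement and join). Then the instance-independent pricing function $p(\mathbf{Q})=f(\mathcal{P}_{\mathbf{Q}}\cap\mathcal{C})$ is arbitrage-free.
   Context: $\mathcal{I}$ is a countable nonempty set of database instances; queries are deterministic functions on $\mathcal{I}$; a query bundle is a finite tuple of queries from a language $\mathcal{L}$, evaluated componentwise; $B(\mathcal{L})$ is the set of bundles, closed under concatenation $\mathbf{Q}_1,\mathbf{Q}_2$. $\mathcal{P}_{\mathbf{Q}}$ is the partition of $\mathcal{I}$ into the equivalence classes of $D\sim D'\iff\mathbf{Q}(D)=\mathbf{Q}(D')$. For a partition $\mathcal{P}$ of $\mathcal{I}$, its restriction is $\mathcal{P}\cap\mathcal{C}=\{B\cap\mathcal{C}:B\in\mathcal{P},\,B\cap\mathcal{C}\ne\emptyset\}$. $\mathcal{P}_1\succeq\mathcal{P}_2$ means each block of $\mathcal{P}_1$ is contained in a block of $\mathcal{P}_2$; the join $\mathcal{P}_1\vee\mathcal{P}_2$ has as blocks the nonempty intersections of a block of $\mathcal{P}_1$ with a block of $\mathcal{P}_2$. $f$ monotone: $\mathcal{P}_1\succeq\mathcal{P}_2\Rightarrow f(\mathcal{P}_1)\ge f(\mathcal{P}_2)$; subadditive: $f(\mathcal{P}_1\vee\mathcal{P}_2)\le f(\mathcal{P}_1)+f(\mathcal{P}_2)$. An instance-independent pricing function $p$ is arbitrage-free if (i) whenever for all $D',D''\in\mathcal{I}$,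 $\mathbf{Q}_2(D')=\mathbf{Q}_2(D'')$ implies $\mathbf{Q}_1(D')=\mathbf{Q}_1(D'')$, we have $p(\mathbf{Q}_2)\ge p(\mathbf{Q}_1)$; and (ii) $p(\mathbf{Q}_1,\mathbf{Q}_2)\le p(\mathbf{Q}_1)+p(\mathbf{Q}_2)$ for all bundles. *)

(* Defs.v *)
From Stdlib Require Import Reals List.
Open Scope R_scope.

Definition iset (Inst : Type) := Inst -> Prop.
Definition ipartition (Inst : Type) := iset Inst -> Prop.

Definition partition_of {Inst : Type} (C : iset Inst) (P : ipartition Inst) : Prop :=
  (forall B, P B -> (exists x, B x) /\ (forall x, B x -> C x)) /\
  (forall x, C x -> exists B, P B /\ B x) /\
  (forall B B' x, P B -> P B' -> B x -> B' x -> B = B').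

Definition refines {Inst : Type} (P1 P2 : ipartition Inst) : Prop :=
  forall B1, P1 B1 -> exists B2, P2 B2 /\ (forall x, B1 x -> B2 x).

Definition pjoin {Inst : Type} (P1 P2 : ipartition Inst) : ipartition Inst :=
  fun B => exists B1 B2, P1 B1 /\ P2 B2 /\ (exists x, B1 x /\ B2 x) /\
                      B = (fun x => B1 x /\ B2 x).

Definition restrict {Inst : Type} (P : ipartition Inst) (C : iset Inst) : ipartition Inst :=
  fun B' => exists B, P B /\ (exists x, B x /\ C x) /\ B' = (fun x => B x /\ C x).

Definition bundle (Inst O : Type) := list (Inst -> O).

Definition eval_bundle {Inst O : Type} (Q : bundle Inst O) (D : Inst) : list O :=
  map (fun q => q D) Q.

Definition in_lang {Inst O : Type} (L : (Inst -> O) -> Prop) (Q : bundle Inst O) : Prop :=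
  forall q, In q Q -> L q.

Definition part_of_bundle {Inst O : Type} (Q : bundle Inst O) : ipartition Inst :=
  fun B => exists D, B = (fun D' => eval_bundle Q D' = eval_bundle Q D).

Definition determines {Inst O : Type} (Q2 Q1 : bundle Inst O) : Prop :=
  forall D' D'', eval_bundle Q2 D' = eval_bundle Q2 D'' ->
                 eval_bundle Q1 D' = eval_bundle Q1 D''.

(* arbitrage-freeness of an instance-independent pricing function on B(L);
   concatenation Q1,Q2 is list append. *)
Definition arbitrage_free {Inst O : Type} (L : (Inst -> O) -> Prop)
  (p : bundle Inst O -> R) : Prop :=
  (forall Q1 Q2, in_lang L Q1 -> in_lang L Q2 ->
     determines Q2 Q1 -> p Q2 >= p Q1) /\
  (forall Q1 Q2, in_lang L Q1 -> in_lang L Q2 ->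
     p (Q1 ++ Q2) <= p Q1 + p Q2).

(* Main.v *)
Require Import Defs.
From Stdlib Require Import Reals List Lra.
Open Scope R_scope.

Section Aux.
Context {Inst T : Type} (C : Inst -> Prop).

Definition Pg (g : Inst -> T) : ipartition Inst :=
  restrict (fun B => exists D, B = fun D' => g D' = g D) C.

Lemma Pg_block g B : Pg g B ->
  exists D, C D /\ B = (fun x => g x = g D /\ C x).
Proof.
  intros [B0 [[D ->] [[y [Hy Cy]] ->]]]. simpl in Hy.
  exists y. split; [exact Cy|]. rewrite <- Hy. reflexivity.
Qed.

Lemma Pg_mk g D : C D -> Pg g (fun x => g x = g D /\ C x).
Proof.
  intro HD. exists (fun D' => g D' = g D). split; [exists D; reflexivity|].
  split; [exists D; split; auto|reflexivity].
Qed.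

Lemma Pg_part g : partition_of C (Pg g).
Proof.
  split; [|split].
  - intros B HB. destruct (Pg_block g B HB) as [D [HD ->]].
    split; [exists D; auto| intros x [_ ?]; auto].
  - intros x Hx. exists (fun y => g y = g x /\ C y). split; [apply Pg_mk; auto| auto].
  - intros B B' x HB HB' Hx Hx'.
    destruct (Pg_block g B HB) as [D [_ ->]].
    destruct (Pg_block g B' HB') as [D' [_ ->]].
    destruct Hx as [E1 _]; destruct Hx' as [E2 _].
    assert (E : g D = g D') by congruence. rewrite E. reflexivity.
Qed.

Lemma Pg_ref (g1 g2 : Inst -> T) : (forall a b, g2 a = g2 b -> g1 a = g1 b) ->
  refines (Pg g2) (Pg g1).
Proof.
  intros H B HB. destruct (Pg_block g2 B HB) as [D [HD ->]].
  exists (fun x => g1 x = g1 D /\ C x). split; [apply Pg_mk; auto|].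
  intros x [E Cx]. auto.
Qed.

Variables (g g1 g2 : Inst -> T).
Hypothesis Hg : forall a b, g a = g b <-> g1 a = g1 b /\ g2 a = g2 b.

Lemma join_part : partition_of C (pjoin (Pg g1) (Pg g2)).
Proof.
  destruct (Pg_part g1) as [A1 [B1 C1]].
  destruct (Pg_part g2) as [A2 [B2 C2]].
  split; [|split].
  - intros B [X1 [X2 [H1 [H2 [w ->]]]]]. split; [exact w|].
    intros x [h1 _]. apply (proj2 (A1 _ H1)). exact h1.
  - intros x Hx. destruct (B1 x Hx) as [X1 [H1 h1]]. destruct (B2 x Hx) as [X2 [H2 h2]].
    exists (fun y => X1 y /\ X2 y). split; [|auto].
    exists X1, X2. repeat split; auto. exists x; auto.
  - intros B B' x [X1 [X2 [H1 [H2 [_ ->]]]]] [X1' [X2' [H1' [H2' [_ ->]]]]] [h1 h2] [h1' h2'].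
    rewrite (C1 X1 X1' x H1 H1' h1 h1'). rewrite (C2 X2 X2' x H2 H2' h2 h2'). reflexivity.
Qed.

Lemma join_ref1 : refines (Pg g) (pjoin (Pg g1) (Pg g2)).
Proof.
  intros B HB. destruct (Pg_block g B HB) as [D [HD ->]].
  exists (fun x => (g1 x = g1 D /\ C x) /\ (g2 x = g2 D /\ C x)). split.
  - exists (fun x => g1 x = g1 D /\ C x), (fun x => g2 x = g2 D /\ C x).
    split; [apply Pg_mk; auto|]. split; [apply Pg_mk; auto|].
    split; [exists D; auto|reflexivity].
  - intros x [E Cx]. apply Hg in E. destruct E. auto.
Qed.

Lemma join_ref2 : refines (pjoin (Pg g1) (Pg g2)) (Pg g).
Proof.
  intros B [X1 [X2 [H1 [H2 [[x0 [h1 h2]] ->]]]]].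
  destruct (Pg_block g1 X1 H1) as [D1 [_ ->]].
  destruct (Pg_block g2 X2 H2) as [D2 [_ ->]].
  destruct h1 as [e1 c0]; destruct h2 as [e2 _].
  exists (fun x => g x = g x0 /\ C x). split; [apply Pg_mk; auto|].
  intros x [[f1 cx] [f2 _]]. split; [|auto]. apply Hg. split; congruence.
Qed.
End Aux.

Lemma eval_app {Inst O : Type} (Q1 Q2 : bundle Inst O) a b :
  eval_bundle (Q1 ++ Q2) a = eval_bundle (Q1 ++ Q2) b <->
  eval_bundle Q1 a = eval_bundle Q1 b /\ eval_bundle Q2 a = eval_bundle Q2 b.
Proof.
  unfold eval_bundle. induction Q1 as [|q Q1 IH]; simpl.
  - tauto.
  - split.
    + intro H. injection H as E1 E2. apply IH in E2. destruct E2. rewrite E1, H, H0. auto.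
    + intros [H1 H2]. injection H1 as E1 E2. rewrite E1. f_equal. apply IH. auto.
Qed.

Theorem lemma24 (Inst O : Type)
  (Icount : exists e : nat -> Inst, forall D, exists n, e n = D)
  (Inonempty : inhabited Inst)
  (L : (Inst -> O) -> Prop) (C : Inst -> Prop)
  (f : ipartition Inst -> R)
  (f_nonneg : forall P, partition_of C P -> 0 <= f P)
  (f_mono : forall P1 P2, partition_of C P1 -> partition_of C P2 ->
              refines P1 P2 -> f P1 >= f P2)
  (f_subadd : forall P1 P2, partition_of C P1 -> partition_of C P2 ->
              f (pjoin P1 P2) <= f P1 + f P2) :
  arbitrage_free L (fun Q => f (restrict (part_of_bundle Q) C)).
Proof.
  split.
  - intros Q1 Q2 _ _ Hd.
    apply (f_mono _ _ (Pg_part C (eval_bundle Q2)) (Pg_part C (eval_bundle Q1))).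
    apply Pg_ref. exact Hd.
  - intros Q1 Q2 _ _.
    pose proof (eval_app Q1 Q2) as Hg.
    pose proof (f_mono _ _ (Pg_part C (eval_bundle (Q1 ++ Q2))) (join_part C _ _)
                 (join_ref1 C _ _ _ Hg)) as M1.
    pose proof (f_mono _ _ (join_part C _ _) (Pg_part C (eval_bundle (Q1 ++ Q2)))
                 (join_ref2 C _ _ _ Hg)) as M2.
    pose proof (f_subadd _ _ (Pg_part C (eval_bundle Q1)) (Pg_part C (eval_bundle Q2))) as S.
    unfold Pg, part_of_bundle in *. lra.
Qed.
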